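(* Fix a natural number $m\ge1$ and reals $a<b$, and let $S=T\cap[a,b]$. Consider the problem ($SDP_0$): minimize $y$ over real numbers $y,x_1,\ldots,x_{2m-1}$ subject to $$y+\sum_{i=1}^k p_{ki}x_i\ \ge\ -p_{k0},\qquad k=1,\ldots,2m-1,$$ and $H_m(1,x_1,\ldots,x_{2m-1},[a,b])\succeq 0$. Let $y^*$ be the optimal (infimal) value and suppose $y^*>0$. Then $$A(\mathbf M,S)\le \frac{1+y^*}{y^*}.$$
   Context: $\mathbf M$ is a 2-point-homogeneous space with its associated real function $\tau(x,y)$ (a function of the distance), $\tau_0:=\tau(x,x)$ (independent of $x$), and $T=\{\tau(x,y):x,y\in\mathbf M\}$. Its zonal spherical functions $\Phi_k$ ($k=0,1,2,\ldots$) are assumed to be real polynomials of degree $k$, written $\Phi_k(t)=\sum_{d=0}^k p_{kd}t^d$, normalized by $\Phi_k(\tau_0)=1$, with the property that for every $k\ge0$ and every finite set $\{x_1,\ldots,x_N\}\subset\mathbf M$ the matrix $(\Phi_k(\tau(x_i,x_j)))_{i,j}$ is positive semidefinite. For $S\subseteq T$, an $S$-code is a finite set $C\subset\mathbf M$ with $\tau(x,y)\in S$ for all distinct $x,y\in C$; $A(\mathbf M,S)$ is the largest cardinality of an $S$-code. For reals $s_0,\ldots,s_{2m-1}$ and $a<b$: $R_m=(s_{i+j-2})_{i,j=1}^m$, $F_m^+(a)=(s_{i+j-1}-a s_{i+j-2})_{i,j=1}^m$, $F_m^-(b)=(b s_{i+j-2}-s_{i+j-1})_{i,j=1}^m$,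 and $H_m(s_0,\ldots,s_{2m-1},[a,b])=\operatorname{diag}(R_m,F_m^+(a),F_m^-(b))$. *)

(* Defs.v *)
From HB Require Import structures.
From mathcomp Require Import all_boot all_order all_algebra.
From mathcomp Require Import all_classical all_reals.
Set Implicit Arguments. Unset Strict Implicit. Unset Printing Implicit Defensive.
Import Order.TTheory GRing.Theory Num.Theory.
Local Open Scope ring_scope.
Local Open Scope classical_set_scope.

Definition psd (R : realType) (n : nat) (A : 'M[R]_n) : Prop :=
  A^T = A /\ forall v : 'cV[R]_n, 0 <= (v^T *m A *m v) 0 0.

(* Hankel-type matrices, 0-indexed: s_{i+j-2} (1-indexed) = s (i+j) *)
Definition Rm (R : realType) (m : nat) (s : nat -> R) : 'M[R]_m :=
  \matrix_(i < m, j < m) s (i + j)%N.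
Definition Fplus (R : realType) (m : nat) (s : nat -> R) (a : R) : 'M[R]_m :=
  \matrix_(i < m, j < m) (s (i + j).+1 - a * s (i + j)%N).
Definition Fminus (R : realType) (m : nat) (s : nat -> R) (b : R) : 'M[R]_m :=
  \matrix_(i < m, j < m) (b * s (i + j)%N - s (i + j).+1).

Definition Hm (R : realType) (m : nat) (s : nat -> R) (a b : R)
  : 'M[R]_((m + m) + m) :=
  block_mx (block_mx (Rm m s) 0 0 (Fplus m s a)) 0 0 (Fminus m s b).

Definition one_then (R : realType) (x : nat -> R) : nat -> R :=
  fun i => if i == 0%N then 1 else x i.

Definition SDP0_values (R : realType) (m : nat) (p : nat -> nat -> R) (a b : R)
  : set R :=
  [set y | exists x : nat -> R,
     (forall k : nat, (1 <= k <= (2 * m).-1)%N ->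
        y + \sum_(1 <= i < k.+1) p k i * x i >= - p k 0%N)
     /\ psd (Hm m (one_then x) a b)].

Definition SDP0_opt (R : realType) (m : nat) (p : nat -> nat -> R) (a b : R) : R :=
  inf (SDP0_values m p a b).

Definition isometry (R : realType) (M : Type) (d : M -> M -> R) (f : M -> M) :=
  bijective f /\ forall x y, d (f x) (f y) = d x y.

Definition two_point_homogeneous (R : realType) (M : Type) (d : M -> M -> R) :=
  forall x1 y1 x2 y2, d x1 y1 = d x2 y2 ->
    exists f, isometry d f /\ f x1 = x2 /\ f y1 = y2.

Definition metric_axioms (R : realType) (M : Type) (d : M -> M -> R) :=
  (forall x y, 0 <= d x y) /\ (forall x y, d x y = 0 <-> x = y) /\
  (forall x y, d x y = d y x) /\ (forall x y z, d x z <= d x y + d y z).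

(* S-codes: finite sets (duplicate-free lists) whose pairwise tau-values lie in S *)
Definition is_code (R : realType) (M : eqType) (tau : M -> M -> R) (S : set R)
  (C : seq M) : Prop :=
  uniq C /\ forall x y, x \in C -> y \in C -> x != y -> S (tau x y).

(* Main.v *)
Require Import Defs.
From HB Require Import structures.
From mathcomp Require Import all_boot all_order all_algebra.
From mathcomp Require Import all_classical all_reals.
From mathcomp Require Import ring lra.
Import Order.TTheory GRing.Theory Num.Theory.
Local Open Scope ring_scope.
Local Open Scope classical_set_scope.

Lemma psd_gram (R : realType) (I : finType) (m : nat) (w t : I -> R) :
  (forall p, 0 <= w p) ->
  psd (\matrix_(i < m, j < m) \sum_p w p * t p ^+ (i + j)%N).
Proof.
move=> w0; split.
  by apply/matrixP => i j; rewrite !mxE addnC.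
move=> v.
have -> : (v^T *m (\matrix_(i < m, j < m) \sum_p w p * t p ^+ (i + j)%N) *m v) 0 0
   = \sum_p w p * (\sum_(i < m) v i 0 * t p ^+ i) ^+ 2.
  rewrite mxE.
  transitivity (\sum_(j < m) \sum_(i < m) \sum_p w p * (v i 0 * t p ^+ i) * (v j 0 * t p ^+ j)).
    apply: eq_bigr => j _; rewrite mxE big_distrl /=; apply: eq_bigr => i _.
    rewrite !mxE big_distrr big_distrl /=; apply: eq_bigr => p _.
    by rewrite exprD; ring.
  rewrite exchange_big /= (exchange_big _ _ _ _ (fun _ => true)) /=.
  under eq_bigr => i _ do rewrite exchange_big /=.
  rewrite exchange_big /=; apply: eq_bigr => p _.
  rewrite expr2 big_distrl /= big_distrr /=; apply: eq_bigr => i _.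
  rewrite big_distrr /= big_distrr /=; apply: eq_bigr => j _; ring.
by apply: sumr_ge0 => p _; apply: mulr_ge0 => //; apply: sqr_ge0.
Qed.

Lemma psd_block (R : realType) (n1 n2 : nat) (A : 'M[R]_n1) (B : 'M[R]_n2) :
  psd A -> psd B -> psd (block_mx A 0 0 B).
Proof.
move=> [sA pA] [sB pB]; split.
  by rewrite tr_block_mx sA sB !trmx0.
move=> v; rewrite -(vsubmxK v) tr_col_mx mul_row_block !mulmx0 !addr0 add0r.
rewrite mul_row_col mxE; apply: addr_ge0; [exact: pA | exact: pB].
Qed.

Lemma quad_ones (R : realType) (N : nat) (A : 'M[R]_N) :
  ((const_mx 1 : 'cV[R]_N)^T *m A *m (const_mx 1 : 'cV[R]_N)) 0 0 = \sum_(p : 'I_N * 'I_N) A p.1 p.2.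
Proof.
rewrite mxE -(pair_big xpredT xpredT (fun i j => A i j)) /= exchange_big /=.
apply: eq_bigr => j _; rewrite !mxE mulr1; apply: eq_bigr => i _.
by rewrite !mxE mul1r.
Qed.

Theorem theorem4p1 (R : realType) (M : eqType) (d : M -> M -> R)
  (g : R -> R) (tau : M -> M -> R) (tau0 : R) (Phi : nat -> {poly R})
  (m : nat) (a b : R) :
  metric_axioms d ->
  two_point_homogeneous d ->
  (forall x y, tau x y = g (d x y)) ->
  (forall x, tau x x = tau0) ->
  (forall k, size (Phi k) = k.+1) ->
  (forall k, (Phi k).[tau0] = 1) ->
  (forall (k N : nat) (pts : 'I_N -> M), injective pts ->
      psd (\matrix_(i < N, j < N) (Phi k).[tau (pts i) (pts j)])) ->
  (1 <= m)%N -> a < b ->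
  let T := [set t | exists x y, tau x y = t] in
  let S := T `&` [set t | a <= t <= b] in
  let ystar := SDP0_opt m (fun k dd => (Phi k)`_dd) a b in
  0 < ystar ->
  forall C : seq M, is_code tau S C ->
    (size C)%:R <= (1 + ystar) / ystar.
Proof.
move=> _ _ _ Htau0 Hsize HPhi1 Hpsd _ _ T S ystar ypos C [uC HC].
have y1 : 1 <= (1 + ystar) / ystar.
  by rewrite ler_pdivlMr // mul1r lerDr.
have [N1|N2] := leqP (size C) 1.
  by apply: le_trans y1; rewrite lern1.
set N := size C in N2 *.
pose pts := tnth (in_tuple C).
have injp : injective pts by apply/tuple_uniqP.
pose tt (p : 'I_N * 'I_N) := tau (pts p.1) (pts p.2).
pose od (p : 'I_N * 'I_N) : R := (p.1 != p.2)%:R.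
pose c : R := (N%:R * (N%:R - 1))^-1.
pose Sd (e : nat) := \sum_p od p * tt p ^+ e.
pose mom (e : nat) := c * Sd e.
have Nr2 : 2%:R <= N%:R :> R by rewrite ler_nat.
have Nm1 : 0 < N%:R - 1 :> R by lra.
have cpos : 0 < c by rewrite invr_gt0 mulr_gt0 // ltr0n ltnW.
have ab (p : 'I_N * 'I_N) : p.1 != p.2 -> a <= tt p <= b.
  move=> ne.
  have ne' : pts p.1 != pts p.2 by apply: contra ne => /eqP /injp ->.
  by case: (HC (pts p.1) (pts p.2) (mem_tnth _ _) (mem_tnth _ _) ne').
have key (i : 'I_N) : \sum_j (i != j)%:R = N%:R - 1 :> R.
  transitivity (\sum_j (1 - (i == j)%:R) : R).
    by apply: eq_bigr => j _; case: (i == j); rewrite /= ?subrr ?subr0.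
  rewrite sumrB sumr_const card_ord (bigD1 i) //= eqxx big1 ?addr0 // => j.
  by rewrite eq_sym => /negbTE ->.
have sumod : \sum_p od p = N%:R * (N%:R - 1).
  rewrite -(pair_big xpredT xpredT (fun i j => (i != j)%:R)) /=.
  under eq_bigr => i _ do rewrite key.
  by rewrite sumr_const card_ord mulr_natl.
have Sd0 : Sd 0 = N%:R * (N%:R - 1).
  by rewrite /Sd -sumod; apply: eq_bigr => p _; rewrite mulr1.
have nz : N%:R * (N%:R - 1) != 0 :> R by rewrite gt_eqF // mulr_gt0 // ltr0n ltnW.
have mom0 : mom 0 = 1 by rewrite /mom Sd0 mulVf.
have one_mom : one_then mom = mom.
  by apply/funext => n; rewrite /one_then; case: eqP => // ->.
have Hps : psd (Hm m (one_then mom) a b).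
  rewrite one_mom /Hm; apply: psd_block; first apply: psd_block.
  - have -> : Rm m mom = \matrix_(i < m, j < m) \sum_p (c * od p) * tt p ^+ (i + j)%N.
      by apply/matrixP => i j; rewrite !mxE /mom /Sd mulr_sumr; apply: eq_bigr => p _; rewrite mulrA.
    by apply: psd_gram => p; rewrite mulr_ge0 // ?ltW // ler0n.
  - have -> : Fplus m mom a = \matrix_(i < m, j < m) \sum_p (c * od p * (tt p - a)) * tt p ^+ (i + j)%N.
      apply/matrixP => i j; rewrite !mxE /mom /Sd !mulr_sumr -sumrB.
      by apply: eq_bigr => p _; rewrite exprS; ring.
    move=> {}; apply: psd_gram => p; rewrite /od; case: eqP => [_|/eqP ne]; first by rewrite !mulr0 mul0r.
    by rewrite /= mulr1; apply: mulr_ge0; [exact: ltW | rewrite subr_ge0; case/andP: (ab p ne)].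
  - have -> : Fminus m mom b = \matrix_(i < m, j < m) \sum_p (c * od p * (b - tt p)) * tt p ^+ (i + j)%N.
      apply/matrixP => i j; rewrite !mxE /mom /Sd !mulr_sumr -sumrB.
      by apply: eq_bigr => p _; rewrite exprS; ring.
    apply: psd_gram => p; rewrite /od; case: eqP => [_|/eqP ne]; first by rewrite !mulr0 mul0r.
    by rewrite /= mulr1; apply: mulr_ge0; [exact: ltW | rewrite subr_ge0; case/andP: (ab p ne)].
have Hcon (k : nat) : (1 <= k)%N ->
    (N%:R - 1)^-1 + \sum_(1 <= i < k.+1) (Phi k)`_i * mom i >= - (Phi k)`_0.
  move=> k1.
  have [_ /(_ (const_mx 1))] := Hpsd k N pts injp; rewrite quad_ones.
  under eq_bigr => p _ do rewrite mxE.
  have split1 (p : 'I_N * 'I_N) :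
      (Phi k).[tau (pts p.1) (pts p.2)] = (1 - od p) + od p * (Phi k).[tt p].
    rewrite /od /tt; case: eqP => [->|_] /=; first by rewrite Htau0 HPhi1 subr0 mul0r addr0.
    by rewrite subrr mul1r add0r.
  under eq_bigr => p _ do rewrite split1.
  rewrite big_split /= sumrB sumod sumr_const card_prod card_ord.
  have E0 : \sum_p od p * (Phi k).[tt p] = \sum_(e < k.+1) (Phi k)`_e * Sd e.
    under eq_bigr => p _ do rewrite horner_coef Hsize big_distrr /=.
    rewrite exchange_big /=; apply: eq_bigr => e _.
    by rewrite /Sd mulr_sumr; apply: eq_bigr => p _; ring.
  rewrite E0 => H0.
  have E1 : \sum_(e < k.+1) (Phi k)`_e * mom e = c * \sum_(e < k.+1) (Phi k)`_e * Sd e.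
    by rewrite mulr_sumr; apply: eq_bigr => e _; rewrite /mom; ring.
  have E2 : \sum_(e < k.+1) (Phi k)`_e * mom e = (Phi k)`_0 + \sum_(1 <= i < k.+1) (Phi k)`_i * mom i.
    by rewrite -(big_mkord xpredT (fun e => (Phi k)`_e * mom e)) big_ltn // mom0 mulr1.
  have E3 : c * N%:R = (N%:R - 1)^-1.
    by rewrite /c invfM mulrAC mulVf ?mul1r // pnatr_eq0 -lt0n ltnW.
  have H1 := mulr_ge0 (ltW cpos) H0.
  have EN : (N * N)%:R - N%:R * (N%:R - 1) = N%:R :> R by rewrite natrM; ring.
  rewrite EN mulrDr E3 -E1 E2 in H1; lra.
have feas : SDP0_values m (fun k dd => (Phi k)`_dd) a b ((N%:R - 1)^-1).
  exists mom; split => // k /andP [k1 _]; exact: Hcon.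
have lb : has_lbound (SDP0_values m (fun k dd => (Phi k)`_dd) a b).
  apply/not_notP => nlb.
  suff : ystar = 0 by move=> y0; rewrite y0 ltxx in ypos.
  by apply: inf_out => -[].
have := ge_inf lb feas; rewrite -/ystar => yle.
have : ystar * (N%:R - 1) <= 1 by rewrite -ler_pdivlMr // div1r.
move=> h; rewrite ler_pdivlMr //; lra.
Qed.
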